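(* For any $X_0,X_1\in2^\omega$, the map $r\mapsto\operatorname{Mix}(X_0,X_1,r)$ from $[0,1]$ to $2^\omega$ is continuous with respect to the Besicovitch pseudometric $d$ on $2^\omega$.
   Context: $d(X,Y)=\limsup_{n}|\{m<n:X(m)\ne Y(m)\}|/n$. For $X,Y\in2^\omega$, $(X\oplus Y)(2n)=X(n)$, $(X\oplus Y)(2n+1)=Y(n)$. The map $b:[0,1]\to2^\omega$ is defined recursively by $b(0)=0^\omega$, $b(1)=1^\omega$, $b(r)=0^\omega\oplus b(2r)$ for $0<r\le1/2$, $b(r)=b(2r-1)\oplus1^\omega$ for $1/2\le r<1$. Chunks: $n_j=\sum_{i<j}i$, $I_j=[n_j,n_{j+1})$. $\operatorname{Mix}(X_0,X_1,r)$ is the sequence whose restriction to $I_j$ equals $X_{b(r)(j)}\restriction I_j$ for every $j$. *)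

(* Defs.v *)
From Stdlib Require Import Reals Lra Lia List ClassicalEpsilon.
From Coquelicot Require Import Coquelicot.
Open Scope R_scope.

Definition cantor := nat -> bool.

Definition ndiff (X Y : cantor) (n : nat) : nat :=
  length (filter (fun m => negb (Bool.eqb (X m) (Y m))) (seq 0 n)).

Definition besi (X Y : cantor) : Rbar :=
  LimSup_seq (fun n => INR (ndiff X Y n) / INR n).

Definition join (X Y : cantor) : cantor :=
  fun n => if Nat.even n then X (Nat.div2 n) else Y (Nat.div2 n).

Definition b_spec (b : R -> cantor) : Prop :=
  b 0 = (fun _ => false) /\
  b 1 = (fun _ => true) /\
  (forall r, 0 < r <= 1/2 -> b r = join (fun _ => false) (b (2 * r))) /\
  (forall r, 1/2 <= r < 1 -> b r = join (b (2 * r - 1)) (fun _ => true)).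

(* b is the (unique) function satisfying these equations. *)
Definition b : R -> cantor :=
  epsilon (inhabits (fun _ _ => false)) b_spec.

Fixpoint nj (j : nat) : nat :=
  match j with
  | O => O
  | S j' => (nj j' + j')%nat
  end.

Definition Mix_spec (X0 X1 : cantor) (r : R) (Z : cantor) : Prop :=
  forall j m, (nj j <= m < nj (S j))%nat ->
    Z m = (if b r j then X1 m else X0 m).

Definition Mix (X0 X1 : cantor) (r : R) : cantor :=
  epsilon (inhabits (fun _ => false)) (Mix_spec X0 X1 r).

(* Main.v *)
Require Import Defs.
From Stdlib Require Import Reals Lra Lia List ClassicalEpsilon Arith FunctionalExtensionality.
From Coquelicot Require Import Coquelicot.
Open Scope R_scope.

Fixpoint g (k : nat) (j : nat) (r : R) : bool :=
  match k with
  | O => false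
  | S k0 =>
    match j with
    | O => if Rle_dec 1 r then true else false
    | S _ =>
      if Rle_dec r 0 then false else
      if Rle_dec 1 r then true else
      if Nat.even j then (if Rle_dec r (1/2) then false else g k0 (Nat.div2 j) (2*r-1))
      else (if Rle_dec (1/2) r then true else g k0 (Nat.div2 j) (2*r))
    end
  end.

Lemma g_fuel : forall k k' j r, (j < k)%nat -> (j < k')%nat -> g k j r = g k' j r.
Proof.
  induction k as [|k IH]; intros k' j r H1 H2; [lia|].
  destruct k' as [|k']; [lia|].
  destruct j as [|j0]; cbn [g]; [reflexivity|].
  assert (Hd : (Nat.div2 (S j0) < S j0)%nat) by (apply Nat.lt_div2; lia).
  destruct (Rle_dec r 0); [reflexivity|].
  destruct (Rle_dec 1 r); [reflexivity|].
  destruct (Nat.even (S j0)).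
  - destruct (Rle_dec r (1/2)); [reflexivity|]. apply IH; lia.
  - destruct (Rle_dec (1/2) r); [reflexivity|]. apply IH; lia.
Qed.

Definition bw (r : R) : cantor := fun j => g (S j) j r.

Lemma bw_unfold : forall j r, (0 < j)%nat ->
  bw r j = if Rle_dec r 0 then false else
      if Rle_dec 1 r then true else
      if Nat.even j then (if Rle_dec r (1/2) then false else bw (2*r-1) (Nat.div2 j))
      else (if Rle_dec (1/2) r then true else bw (2*r) (Nat.div2 j)).
Proof.
  intros j r Hj. unfold bw. destruct j as [|j0]; [lia|].
  assert (Hd : (Nat.div2 (S j0) < S j0)%nat) by (apply Nat.lt_div2; lia).
  rewrite <- (g_fuel (S j0) (S (Nat.div2 (S j0))) _ (2*r-1)) by lia.
  rewrite <- (g_fuel (S j0) (S (Nat.div2 (S j0))) _ (2*r)) by lia.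
  reflexivity.
Qed.

Lemma bw0 : forall j, bw 0 j = false.
Proof.
  intros [|j]. - unfold bw; simpl. destruct (Rle_dec 1 0); [lra|auto].
  - rewrite bw_unfold by lia. destruct (Rle_dec 0 0); [auto|lra].
Qed.

Lemma bw1 : forall j, bw 1 j = true.
Proof.
  intros [|j]. - unfold bw; simpl. destruct (Rle_dec 1 1); [auto|lra].
  - rewrite bw_unfold by lia. destruct (Rle_dec 1 0); [lra|].
    destruct (Rle_dec 1 1); [auto|lra].
Qed.

Lemma bw_spec : b_spec bw.
Proof.
  split; [|split; [|split]].
  - apply functional_extensionality; apply bw0.
  - apply functional_extensionality; apply bw1.
  - intros r Hr. apply functional_extensionality; intros j. unfold join.
    destruct j as [|j0].
    + unfold bw; simpl. destruct (Rle_dec 1 r); [lra|auto].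
    + rewrite bw_unfold by lia.
      destruct (Rle_dec r 0); [lra|]. destruct (Rle_dec 1 r); [lra|].
      destruct (Nat.even (S j0)).
      * destruct (Rle_dec r (1/2)); [auto|lra].
      * destruct (Rle_dec (1/2) r); [|auto].
        replace (2*r) with 1 by lra. rewrite bw1; auto.
  - intros r Hr. apply functional_extensionality; intros j. unfold join.
    destruct j as [|j0].
    + unfold bw; simpl. destruct (Rle_dec 1 r); [lra|].
      destruct (Rle_dec 1 (2*r-1)); [lra|auto].
    + rewrite bw_unfold by lia.
      destruct (Rle_dec r 0); [lra|]. destruct (Rle_dec 1 r); [lra|].
      destruct (Nat.even (S j0)).
      * destruct (Rle_dec r (1/2)); [|auto].
        replace (2*r-1) with 0 by lra. rewrite bw0; auto.
      * destruct (Rle_dec (1/2) r); [auto|lra].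
Qed.

Lemma b_ok : b_spec b.
Proof. unfold b. apply epsilon_spec. exists bw. apply bw_spec. Qed.

Lemma b_zero : forall n, b 0 n = false.
Proof. intros n. destruct b_ok as [H _]. rewrite H; auto. Qed.
Lemma b_one : forall n, b 1 n = true.
Proof. intros n. destruct b_ok as [_ [H _]]. rewrite H; auto. Qed.
Lemma b_L : forall r n, 0 < r <= 1/2 -> b r n = join (fun _ => false) (b (2*r)) n.
Proof. intros r n Hr. destruct b_ok as [_ [_ [H _]]]. rewrite (H r Hr); auto. Qed.
Lemma b_R : forall r n, 1/2 <= r < 1 -> b r n = join (b (2*r-1)) (fun _ => true) n.
Proof. intros r n Hr. destruct b_ok as [_ [_ [_ H]]]. rewrite (H r Hr); auto. Qed.

Lemma pow2_ge : forall k, INR k <= 2 ^ k.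
Proof.
  induction k. simpl; lra. rewrite S_INR. simpl.
  assert (1 <= 2 ^ k) by (apply pow_R1_Rle; lra). lra.
Qed.

Lemma b_first_aux : forall k t, 0 <= t < 1 -> (1 - t) * 2 ^ k >= 1 -> b t 0%nat = false.
Proof.
  induction k; intros t Ht H.
  - simpl in H. replace t with 0 by lra. apply b_zero.
  - destruct (Req_dec t 0) as [->|Ht0]; [apply b_zero|].
    destruct (Rle_dec t (1/2)).
    + rewrite b_L by lra. unfold join. simpl. auto.
    + rewrite b_R by lra. unfold join. simpl. apply IHk; [lra|].
      simpl in H. lra.
Qed.

Lemma b_first : forall t, 0 <= t < 1 -> b t 0%nat = false.
Proof.
  intros t Ht. destruct (INR_archimed (1 - t) 1) as [k Hk]; [lra|].
  apply (b_first_aux k); auto. pose proof (pow2_ge k).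
  assert (0 < 1 - t) by lra. nra.
Qed.

Lemma b_mono : forall n r s, 0 <= r <= s -> s <= 1 -> b r n = true -> b s n = true.
Proof.
  induction n as [n IH] using lt_wf_ind. intros r s Hrs Hs1 Hb.
  destruct (Req_dec s 1) as [->|Hs]; [apply b_one|].
  destruct (Req_dec r 0) as [->|Hr0]; [rewrite b_zero in Hb; discriminate|].
  destruct n as [|n0].
  - rewrite b_first in Hb by lra. discriminate.
  - assert (Hd : (Nat.div2 (S n0) < S n0)%nat) by (apply Nat.lt_div2; lia).
    destruct (Rle_dec r (1/2)).
    + rewrite b_L in Hb by lra. unfold join in Hb.
      destruct (Nat.even (S n0)) eqn:He; [discriminate|].
      destruct (Rle_dec s (1/2)).
      * rewrite b_L by lra. unfold join. rewrite He.
        apply (IH _ Hd (2*r)); auto; lra.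
      * rewrite b_R by lra. unfold join. rewrite He. auto.
    + rewrite b_R in Hb by lra. rewrite b_R by lra. unfold join in *.
      destruct (Nat.even (S n0)) eqn:He; [|auto].
      apply (IH _ Hd (2*r-1)); auto; lra.
Qed.

Fixpoint cnt (f : nat -> bool) (n : nat) : nat :=
  match n with O => O | S n' => (cnt f n' + if f n' then 1 else 0)%nat end.

Lemma cnt_le : forall f n, (cnt f n <= n)%nat.
Proof. induction n; simpl; [lia|destruct (f n); lia]. Qed.
Lemma cnt_ext : forall f g n, (forall m, f m = g m) -> cnt f n = cnt g n.
Proof. intros f g n H; induction n; simpl; auto. rewrite IHn, H; auto. Qed.
Lemma cnt_false : forall n, cnt (fun _ => false) n = 0%nat.
Proof. induction n; simpl; lia. Qed.
Lemma cnt_true : forall n, cnt (fun _ => true) n = n.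
Proof. induction n; simpl; lia. Qed.
Lemma cnt_mono : forall f m n, (m <= n)%nat -> (cnt f m <= cnt f n)%nat.
Proof.
  intros f m n H; induction H; auto. simpl. destruct (f m0); lia.
Qed.

Lemma cnt_join : forall X Y k,
  cnt (join X Y) (2*k) = (cnt X k + cnt Y k)%nat /\
  cnt (join X Y) (S (2*k)) = (cnt X (S k) + cnt Y k)%nat.
Proof.
  intros X Y k. induction k as [|k [IH1 IH2]].
  - simpl. unfold join. simpl. split; auto. destruct (X 0%nat); auto.
  - assert (E : (2 * S k = S (S (2*k)))%nat) by lia.
    rewrite E. split.
    + change (cnt (join X Y) (S (S (2*k))))%nat with
        (cnt (join X Y) (S (2*k)) + if join X Y (S (2*k)) then 1 else 0)%nat.
      rewrite IH2. unfold join at 1.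
      replace (S (2*k)) with (2*k+1)%nat by lia.
      rewrite Nat.even_odd.
      replace (2*k+1)%nat with (S (2*k)) by lia. rewrite Nat.div2_succ_double.
      simpl (cnt Y (S k)). lia.
    + change (cnt (join X Y) (S (S (S (2*k)))))%nat with
        (cnt (join X Y) (S (S (2*k))) + if join X Y (S (S (2*k))) then 1 else 0)%nat.
      change (cnt (join X Y) (S (S (2*k))))%nat with
        (cnt (join X Y) (S (2*k)) + if join X Y (S (2*k)) then 1 else 0)%nat.
      rewrite IH2. unfold join.
      replace (S (2*k)) with (2*k+1)%nat by lia.
      rewrite Nat.even_odd.
      replace (S (2*k+1)) with (2*(S k))%nat by lia.
      rewrite Nat.even_even, Nat.div2_double.
      replace (2*k+1)%nat with (S (2*k)) by lia. rewrite Nat.div2_succ_double.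
      change (cnt X (S (S k))) with (cnt X (S k) + if X (S k) then 1 else 0)%nat.
      change (cnt Y (S k)) with (cnt Y k + if Y k then 1 else 0)%nat. lia.
Qed.

Lemma ones_bound : forall e, 0 < e -> exists C, 0 <= C /\
  forall N t, 0 <= t <= 1 -> Rabs (INR (cnt (b t) N) - t * INR N) <= e * INR N + C.
Proof.
  intros e He. destruct (INR_archimed e (2 + e) He) as [N0 HN0].
  exists (INR N0). split; [apply pos_INR|].
  intros N. induction N as [N IH] using lt_wf_ind. intros t Ht.
  destruct (le_lt_dec N N0) as [Hle|Hlt].
  - pose proof (cnt_le (b t) N) as Hc. apply le_INR in Hc. apply le_INR in Hle.
    pose proof (pos_INR (cnt (b t) N)). pose proof (pos_INR N).
    assert (0 <= t * INR N <= INR N) by nra.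
    assert (0 <= e * INR N) by nra. split_Rabs; lra.
  - assert (HeN : e * INR N > 2 + e).
    { apply lt_INR in Hlt. nra. }
    pose proof (pos_INR N).
    destruct (Req_dec t 0) as [->|Ht0].
    { rewrite (cnt_ext _ (fun _ => false)) by apply b_zero. rewrite cnt_false. simpl.
      rewrite Rmult_0_l, Rminus_0_r, Rabs_R0. pose proof (pos_INR N0). nra. }
    destruct (Req_dec t 1) as [->|Ht1].
    { rewrite (cnt_ext _ (fun _ => true)) by apply b_one. rewrite cnt_true.
      replace (INR N - 1 * INR N) with 0 by ring. rewrite Rabs_R0. pose proof (pos_INR N0). nra. }
    pose proof (pos_INR N0).
    destruct (Nat.Even_or_Odd N) as [[k Hk]|[k Hk]]; subst N.
    + rewrite mult_INR in *. simpl (INR 2) in *.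
      assert (Hk1 : e * INR k > 1) by nra.
      assert (Hk0 : (k < 2 * k)%nat) by (destruct k; simpl in Hk1; [lra|lia]).
      destruct (Rle_dec t (1/2)).
      * rewrite (cnt_ext _ (join (fun _ => false) (b (2*t)))) by (intro; apply b_L; lra).
        rewrite (proj1 (cnt_join _ _ k)), cnt_false. simpl (0 + _)%nat.
        specialize (IH k Hk0 (2*t) ltac:(lra)).
        pose proof (pos_INR k). split_Rabs; nra.
      * rewrite (cnt_ext _ (join (b (2*t-1)) (fun _ => true))) by (intro; apply b_R; lra).
        rewrite (proj1 (cnt_join _ _ k)), cnt_true, plus_INR.
        specialize (IH k Hk0 (2*t-1) ltac:(lra)).
        pose proof (pos_INR k). split_Rabs; nra.
    + replace (2 * k + 1)%nat with (S (2*k)) in * by lia.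
      rewrite S_INR, mult_INR in *. simpl (INR 2) in *.
      assert (Hk1 : e * INR k > 1) by nra.
      assert (Hk0 : (k < S (2 * k))%nat) by lia.
      destruct (Rle_dec t (1/2)).
      * rewrite (cnt_ext _ (join (fun _ => false) (b (2*t)))) by (intro; apply b_L; lra).
        rewrite (proj2 (cnt_join _ _ k)), cnt_false. simpl (0 + _)%nat.
        specialize (IH k Hk0 (2*t) ltac:(lra)).
        pose proof (pos_INR k). split_Rabs; nra.
      * rewrite (cnt_ext _ (join (b (2*t-1)) (fun _ => true))) by (intro; apply b_R; lra).
        rewrite (proj2 (cnt_join _ _ k)), cnt_true, plus_INR.
        assert (Hk2 : (S k < S (2 * k))%nat) by (destruct k; simpl in Hk1; [lra|lia]).
        specialize (IH (S k) Hk2 (2*t-1) ltac:(lra)).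
        rewrite S_INR in IH.
        pose proof (pos_INR k). split_Rabs; nra.
Qed.

Definition dif (X Y : cantor) : nat -> bool := fun m => negb (Bool.eqb (X m) (Y m)).

Lemma cnt_dif_mono : forall r s N, 0 <= r <= s -> s <= 1 ->
  (cnt (dif (b r) (b s)) N + cnt (b r) N = cnt (b s) N)%nat.
Proof.
  intros r s N H1 H2. induction N; simpl; auto.
  unfold dif at 2. destruct (b r N) eqn:E.
  - rewrite (b_mono N r s) by auto. simpl. lia.
  - destruct (b s N); simpl; lia.
Qed.

Lemma dif_sym : forall X Y m, dif X Y m = dif Y X m.
Proof. intros; unfold dif; destruct (X m), (Y m); auto. Qed.

Lemma D_bound : forall e, 0 < e -> exists C, 0 <= C /\
  forall r s N, 0 <= r <= 1 -> 0 <= s <= 1 ->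
  INR (cnt (dif (b r) (b s)) N) <= Rabs (r - s) * INR N + 2 * e * INR N + 2 * C.
Proof.
  intros e He. destruct (ones_bound e He) as [C [HC H]]. exists C. split; auto.
  assert (K : forall r s N, 0 <= r <= s -> s <= 1 ->
     INR (cnt (dif (b r) (b s)) N) <= Rabs (r - s) * INR N + 2 * e * INR N + 2 * C).
  { intros r s N H1 H2. pose proof (cnt_dif_mono r s N H1 H2) as E.
    assert (E' : INR (cnt (dif (b r) (b s)) N) = INR (cnt (b s) N) - INR (cnt (b r) N)).
    { rewrite <- E, plus_INR. ring. }
    rewrite E'. pose proof (H N r ltac:(lra)). pose proof (H N s ltac:(lra)).
    rewrite Rabs_left1 by lra. split_Rabs; lra. }
  intros r s N Hr Hs. destruct (Rle_dec r s).
  - apply K; lra.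
  - rewrite (cnt_ext _ (dif (b s) (b r))) by apply dif_sym.
    rewrite Rabs_minus_sym. apply K; lra.
Qed.

Lemma nj_mono : forall j j', (j <= j')%nat -> (nj j <= nj j')%nat.
Proof. intros j j' H; induction H; simpl; lia. Qed.

Lemma chunk_ex : forall m, exists j, (nj j <= m < nj (S j))%nat.
Proof.
  induction m.
  - exists 1%nat. simpl. lia.
  - destruct IHm as [j Hj]. destruct (Nat.eq_dec (S m) (nj (S j))).
    + exists (S j). simpl in *. lia.
    + exists j. simpl in *. lia.
Qed.

Lemma chunk_uniq : forall j j' m, (nj j <= m < nj (S j))%nat ->
  (nj j' <= m < nj (S j'))%nat -> j = j'.
Proof.
  intros j j' m H1 H2. destruct (lt_eq_lt_dec j j') as [[H|H]|H]; auto.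
  - pose proof (nj_mono (S j) j' H). lia.
  - pose proof (nj_mono (S j') j H). lia.
Qed.

Lemma Mix_ok : forall X0 X1 r j m, (nj j <= m < nj (S j))%nat ->
  Mix X0 X1 r m = if b r j then X1 m else X0 m.
Proof.
  intros X0 X1 r. unfold Mix. apply epsilon_spec.
  set (ch := fun m => epsilon (inhabits 0%nat) (fun j => (nj j <= m < nj (S j))%nat)).
  assert (Hch : forall m, (nj (ch m) <= m < nj (S (ch m)))%nat).
  { intro m. unfold ch. apply epsilon_spec. apply chunk_ex. }
  exists (fun m => if b r (ch m) then X1 m else X0 m).
  intros j m Hm. rewrite (chunk_uniq (ch m) j m); auto.
Qed.

Lemma chunk_step : forall X0 X1 r s J k, (k <= J)%nat ->
  (cnt (dif (Mix X0 X1 r) (Mix X0 X1 s)) (nj J + k) <=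
   cnt (dif (Mix X0 X1 r) (Mix X0 X1 s)) (nj J) + k * (if dif (b r) (b s) J then 1 else 0))%nat.
Proof.
  intros X0 X1 r s J k Hk. induction k.
  - rewrite Nat.add_0_r. lia.
  - replace (nj J + S k)%nat with (S (nj J + k)) by lia. simpl (cnt _ (S _)).
    assert (Hm : (nj J <= nj J + k < nj (S J))%nat) by (simpl; lia).
    specialize (IHk ltac:(lia)).
    unfold dif in *. rewrite (Mix_ok X0 X1 r J _ Hm), (Mix_ok X0 X1 s J _ Hm).
    destruct (b r J), (b s J), (X0 (nj J + k)%nat), (X1 (nj J + k)%nat); simpl in *; lia.
Qed.

Lemma chunk_bound : forall X0 X1 r s J,
  (cnt (dif (Mix X0 X1 r) (Mix X0 X1 s)) (nj J) <= J * cnt (dif (b r) (b s)) J)%nat.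
Proof.
  intros X0 X1 r s J. induction J.
  - simpl. lia.
  - change (nj (S J)) with (nj J + J)%nat.
    pose proof (chunk_step X0 X1 r s J J (le_n _)).
    simpl (cnt (dif (b r) (b s)) (S J)). nia.
Qed.

Lemma ndiff_cnt : forall X Y n, ndiff X Y n = cnt (dif X Y) n.
Proof.
  intros X Y n. unfold ndiff. induction n; auto.
  rewrite seq_S, filter_app, length_app, IHn. simpl. unfold dif.
  destruct (negb (Bool.eqb (X n) (Y n))); simpl; lia.
Qed.

Lemma nj_formula : forall J, (2 * nj J + J = J * J)%nat.
Proof. induction J; simpl nj; nia. Qed.

Lemma limsup_lt : forall u c eps, c < eps ->
  (exists N, forall n, (N <= n)%nat -> u n <= c) -> Rbar_lt (LimSup_seq u) (Finite eps).
Proof.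
  intros u c eps Hc [N HN]. destruct (ex_LimSup_seq u) as [l Hl].
  rewrite (is_LimSup_seq_unique _ _ Hl). destruct l as [l| |]; simpl in *.
  - destruct (Hl (mkposreal (eps - c) ltac:(lra))) as [H1 _].
    destruct (H1 N) as [n [Hn Hu]]. simpl in Hu. specialize (HN n Hn). lra.
  - destruct (Hl c N) as [n [Hn Hu]]. specialize (HN n Hn). lra.
  - auto.
Qed.

Theorem lemma2p8 (X0 X1 : cantor) :
  forall r, 0 <= r <= 1 ->
  forall eps, 0 < eps ->
  exists delta, 0 < delta /\
    forall s, 0 <= s <= 1 -> Rabs (s - r) < delta ->
      Rbar_lt (besi (Mix X0 X1 r) (Mix X0 X1 s)) (Finite eps).
Proof.
  intros r Hr eps Heps. exists (eps/8). split; [lra|]. intros s Hs Hrs.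
  destruct (D_bound (eps/16) ltac:(lra)) as [C [HC HD]].
  destruct (INR_archimed eps (32*(C+1)) Heps) as [K1 HK1].
  set (K := Nat.max 16 K1).
  unfold besi. apply (limsup_lt _ (7*eps/8)); [lra|].
  exists (nj K). intros n Hn.
  destruct (chunk_ex n) as [J HJ].
  assert (HJK : (K <= J)%nat).
  { destruct (le_lt_dec K J); auto. pose proof (nj_mono (S J) K l). lia. }
  assert (Hx16 : 16 <= INR J).
  { replace 16 with (INR 16) by (simpl; lra). apply le_INR. lia. }
  assert (HxK : eps * INR J >= 32 * (C + 1)).
  { assert (INR K1 <= INR J) by (apply le_INR; lia). nra. }
  pose proof (nj_formula J) as Fj.
  assert (Fr : 2 * INR (nj J) + INR J = INR J * INR J).
  { rewrite <- mult_INR. rewrite <- Fj. rewrite plus_INR, mult_INR. simpl. ring. }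
  assert (Hn1 : INR (nj J) <= INR n) by (apply le_INR; lia).
  rewrite ndiff_cnt.
  set (x := INR J) in *.
  assert (Hpos : 0 < INR n) by nra.
  apply Rle_div_l; [lra|].
  assert (A1 : (cnt (dif (Mix X0 X1 r) (Mix X0 X1 s)) n <=
               S J * cnt (dif (b r) (b s)) (S J))%nat).
  { eapply Nat.le_trans; [apply cnt_mono; apply Nat.lt_le_incl; apply HJ|].
    apply chunk_bound. }
  apply le_INR in A1. rewrite mult_INR in A1.
  pose proof (HD r s (S J) Hr Hs) as A2.
  rewrite S_INR in *. fold x in A1, A2.
  rewrite Rabs_minus_sym in Hrs.
  assert (A3 : INR (cnt (dif (b r) (b s)) (S J)) <= eps/4 * (x+1) + 2 * C).
  { assert (Rabs (r - s) * (x + 1) <= eps/8 * (x+1)) by (apply Rmult_le_compat_r; lra).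
    lra. }
  assert (A4 : INR (cnt (dif (Mix X0 X1 r) (Mix X0 X1 s)) n) <=
               (x+1) * (eps/4 * (x+1) + 2 * C)).
  { eapply Rle_trans; [apply A1|]. apply Rmult_le_compat_l; lra. }
  assert (P1 : x * x >= 15 * x + 4) by nra.
  assert (P2 : eps * x * x >= 32 * C * x) by nra.
  assert (P3 : (x+1) * (eps/4 * (x+1) + 2 * C) <= 7*eps/8 * ((x*x - x)/2)) by nra.
  assert (P4 : 7*eps/8 * ((x*x - x)/2) <= 7*eps/8 * INR n) by
    (apply Rmult_le_compat_l; lra).
  lra.
Qed.
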